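(* Fix $\epsilon\in(0,\mu)$ and, for $s\in\{1,2,\dots\}$, let $$\kappa(V)=\inf\{k\ge1:\ V_{n+1}\le n(\mu-\epsilon)/s\ \text{for all } n\ge k\}.$$ If $EV_1^q<\infty$ for some $q>2$, then $E\kappa(V)=O(s^{q/(q-1)})$ as $s\to\infty$.
   Context: $(V_n)_{n\ge1}$ are i.i.d. nonnegative random variables (service times; their law does not depend on $s$), and $\mu>0$ is a fixed constant (the mean interarrival time of the base system). $\inf\emptyset=\infty$. *)

(* Defs.v *)
From HB Require Import structures.
From mathcomp Require Import all_boot all_order all_algebra.
From mathcomp Require Import all_classical all_reals all_analysis.

Set Implicit Arguments.
Unset Strict Implicit.
Unset Printing Implicit Defensive.

Import Order.TTheory GRing.Theory Num.Theory.
Local Open Scope classical_set_scope.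
Local Open Scope ring_scope.

Definition mutually_independent d (T : measurableType d) (R : realType)
  (P : probability T R) (X : nat -> T -> R) : Prop :=
  forall (I : seq nat) (B : nat -> set R), uniq I ->
    (forall i, i \in I -> measurable (B i)) ->
    P (\bigcap_(i in [set` I]) (X i @^-1` B i)) =
    (\prod_(i <- I) P (X i @^-1` B i))%E.

Definition identically_distributed d (T : measurableType d) (R : realType)
  (P : probability T R) (X : nat -> T -> R) : Prop :=
  forall n (B : set R), measurable B -> P (X n @^-1` B) = P (X 0%N @^-1` B).

Definition iid d (T : measurableType d) (R : realType)
  (P : probability T R) (X : nat -> T -> R) : Prop :=
  (forall n, measurable_fun setT (X n)) /\
  mutually_independent P X /\ identically_distributed P X.

(* Convention: the paper's V_{n+1} is  V n  here (V : nat -> T -> R,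
   V 0 = V_1).  kappa s V w = inf { k >= 1 : forall n >= k,
   V_{n+1} w <= n (mu - eps) / s }, with inf of the empty set = +oo. *)
Definition kappa (R : realType) (T : Type) (mu eps : R) (s : nat)
  (V : nat -> T -> R) (w : T) : \bar R :=
  ereal_inf [set ((k%:R)%:E : \bar R) | k in
    [set k : nat | (1 <= k)%N /\
       forall n : nat, (k <= n)%N -> V n w <= n%:R * (mu - eps) / s%:R]].

(* Main.v *)
Require Import Defs.
From HB Require Import structures.
From mathcomp Require Import all_boot all_order all_algebra.
From mathcomp Require Import all_classical all_reals all_analysis.
From mathcomp Require Import measurable_realfun.
From mathcomp Require Import zify ring lra.
Import Order.TTheory GRing.Theory Num.Theory.
Local Open Scope classical_set_scope.
Local Open Scope ring_scope.

Definition kterm (R : realType) (T : Type) (mu eps : R) (s : nat) (V : nat -> T -> R)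
  (K n : nat) (w : T) : \bar R :=
  (((K <= n)%N)%:R * n%:R * \1_(V n @^-1` `]n%:R * (mu - eps) / s%:R, +oo[) w)%:E.

Arguments kterm {R T}.

Lemma kterm_ge0 (R : realType) (T : Type) (mu eps : R) (s : nat) (V : nat -> T -> R) (K n : nat) (w : T) :
  (0 <= kterm mu eps s V K n w)%E.
Proof. by rewrite /kterm lee_fin !mulr_ge0. Qed.

Lemma kappa_le (R : realType) (T : Type) (mu eps : R) (s : nat) (V : nat -> T -> R)
  (w : T) (K : nat) : (1 <= K)%N ->
  (kappa mu eps s V w <= (K.+1)%:R%:E + \sum_(n <oo) kterm mu eps s V K n w)%E.
Proof.
move=> K1.
set S := (\sum_(n <oo) _)%E.
have u0 := @kterm_ge0 R T mu eps s V K.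
have S0 : (0 <= S)%E by apply: nneseries_ge0 => n _ _.
have [Sy|Sfin] : S = +oo%E \/ S \is a fin_num.
  by case: (S) S0 => [r _|_|]; [right|left|].
  by rewrite Sy addey ?leey.
have uS n : (kterm mu eps s V K n w <= S)%E.
  apply: le_trans (nneseries_lim_ge (m:=0) n.+1 (fun n _ _ => u0 n w)).
  by rewrite big_nat_recr//= leeDr// sume_ge0.
set t := Num.truncn (fine S).
have tS : t%:R <= fine S by rewrite truncn_le fine_ge0.
pose k := (K + t.+1)%N.
apply: (@le_trans _ _ (k%:R%:E)).
  apply: ereal_inf_lbound; exists k => //; split; first by rewrite /k; lia.
  move=> n kn; rewrite leNgt; apply/negP => hn.
  have : (kterm mu eps s V K n w <= S)%E := uS n.
  rewrite /kterm indicE mem_set/=; last by rewrite in_itv/= hn.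
  have -> : ((K <= n)%N) by rewrite /k in kn; lia.
  rewrite mul1r mulr1 -(fineK Sfin) lee_fin.
  rewrite -(truncn_ge_nat _ (fine_ge0 S0)) -/t => nt.
  rewrite /k in kn; lia.
rewrite -(fineK Sfin) -EFinD lee_fin /k natrD -addn1 natrD.
lra.
Qed.

Lemma count_bound (R : realType) (a v : R) (N : nat) : 0 < a -> 0 <= v ->
  \sum_(0 <= n < N) (((n%:R * a < v)%R)%:R : R) <= N%:R /\
  \sum_(0 <= n < N) (((n%:R * a < v)%R)%:R : R) <= v / a + 1.
Proof.
move=> a0 v0; elim: N => [|N [IH1 IH2]].
  rewrite big_nil; split => //.
  have := divr_ge0 v0 (ltW a0); lra.
rewrite big_nat_recr//=; case: (ltP (N%:R * a) v) => h /=.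
  split; first by rewrite -natr1; lra.
  have : N%:R < v / a by rewrite ltr_pdivlMr.
  lra.
by rewrite addr0 -natr1; split => //; lra.
Qed.

Lemma psum_bound (R : realType) (a v q : R) (K N : nat) : 0 < a -> 0 <= v -> 2 < q ->
  (1 <= K)%N ->
  \sum_(0 <= n < N) (((K <= n)%N)%:R * n%:R * ((n%:R * a < v)%R)%:R : R)
  <= 2 * (v / a) `^ q / K%:R `^ (q - 2).
Proof.
move=> a0 v0 q2 K1.
set z := v / a.
have z0 : 0 <= z by rewrite /z divr_ge0// ltW.
have K0 : (0 : R) < K%:R by rewrite ltr0n.
have Kp : 0 < K%:R `^ (q - 2) by rewrite powR_gt0.
have nz n : (n%:R * a < v) = (n%:R < z) by rewrite /z ltr_pdivlMr.
case: (leP z K%:R) => hz.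
  rewrite big1; last first.
  move=> n _; case: (leqP K n) => Kn /=; last by rewrite !mul0r.
  rewrite nz; have : z <= n%:R by rewrite (le_trans hz)// ler_nat.
  by rewrite leNgt => /negbTE ->; rewrite mulr0.
  by apply: divr_ge0; [apply: mulr_ge0|]; rewrite ?powR_ge0.
have z1 : 1 <= z by rewrite (le_trans _ (ltW hz))// ler1n.
apply: (@le_trans _ _ (z * \sum_(0 <= n < N) (((n%:R * a < v)%R)%:R : R))).
  rewrite mulr_sumr; apply: ler_sum => n _.
  rewrite nz; case: (ltP n%:R z) => h /=; last by rewrite !mulr0.
  rewrite !mulr1; case: (K <= n)%N; rewrite ?mul0r ?mul1r //; exact: ltW.
have [_ hc] := @count_bound R a v N a0 v0; rewrite -/z in hc.
apply: (@le_trans _ _ (2 * z ^+ 2)).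
  have : z * \sum_(0 <= n < N) (((n%:R * a < v)%R)%:R : R) <= z * (z + 1).
    by rewrite ler_wpM2l.
  nra.
rewrite -mulrA ler_wpM2l// ler_pdivlMr//.
have -> : z `^ q = z `^ 2%:R * z `^ (q - 2).
  rewrite -powRD; first by congr (_ `^ _); rewrite /=; lra.
  by apply/implyP => _; rewrite gt_eqF// (lt_le_trans ltr01).
rewrite powR_mulrn// ler_wpM2l ?exprn_ge0//.
by apply: ge0_ler_powR; rewrite ?nnegrE ?ltW//; lra.
Qed.

Section S.
Context d (T : measurableType d) (R : realType) (mu : {measure set T -> \bar R}).
Local Open Scope ereal_scope.

Lemma le_int_nm (f g : T -> \bar R) : (forall x, 0 <= f x) -> (forall x, f x <= g x) ->
  \int[mu]_x f x <= \int[mu]_x g x.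
Proof.
move=> f0 fg.
have g0 : forall x, 0 <= g x by move=> x; exact: le_trans (f0 x) (fg x).
rewrite !ge0_integralTE//.
apply: ereal_sup_le => z [h hf <-]; exists h => //= x.
exact: le_trans (hf x) (fg x).
Qed.

Lemma nneseries_le_bound (u : (\bar R)^nat) (B : \bar R) :
  (forall n, 0 <= u n) -> (forall N, \sum_(0 <= n < N) u n <= B) ->
  \sum_(n <oo) u n <= B.
Proof.
move=> u0 hB.
apply: lime_le.
  exact: is_cvg_ereal_nneg_natsum.
by apply: nearW => N; exact: hB.
Qed.
End S.

Lemma kterm_meas d (T : measurableType d) (R : realType) (mu eps : R) (s : nat)
  (V : nat -> T -> R) K n : measurable_fun setT (V n) ->
  measurable_fun setT (kterm mu eps s V K n).
Proof.
move=> mV; apply/measurable_EFinP; apply: measurable_funM => //.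
apply: measurable_indic.
by have := mV measurableT _ (measurable_itv `]n%:R * (mu - eps) / s%:R, +oo[); rewrite setTI.
Qed.

Lemma int_kterm d (T : measurableType d) (R : realType) (P : probability T R)
  (mu eps : R) (s : nat) (V : nat -> T -> R) K n : measurable_fun setT (V n) ->
  (\int[P]_w kterm mu eps s V K n w =
   ((((K <= n)%N)%:R * n%:R)%R)%:E * P (V n @^-1` `](n%:R * (mu - eps) / s%:R)%R, +oo[))%E.
Proof.
move=> mV.
have mA : measurable (V n @^-1` `]n%:R * (mu - eps) / s%:R, +oo[).
  by have := mV measurableT _ (measurable_itv `]n%:R * (mu - eps) / s%:R, +oo[); rewrite setTI.
rewrite /kterm; under eq_integral do rewrite EFinM.
rewrite ge0_integralZl_EFin//.
- by rewrite integral_indic// setIT.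
all: try by move=> x _; rewrite lee_fin.
all: try by apply/measurable_EFinP; exact: measurable_indic.
all: by rewrite mulr_ge0.
Qed.

Lemma kterm_eq (R : realType) (T : Type) (mu eps : R) (s : nat) (V : nat -> T -> R)
  (K n : nat) (w : T) : kterm mu eps s V K n w =
  (((K <= n)%N)%:R * n%:R * ((n%:R * ((mu - eps) / s%:R) < V n w)%R)%:R)%:E.
Proof.
rewrite /kterm indicE mulrA.
have -> : (w \in V n @^-1` `]n%:R * (mu - eps) / s%:R, +oo[) =
   (n%:R * (mu - eps) / s%:R < V n w).
  by apply/idP/idP; rewrite inE/= in_itv/= andbT.
by [].
Qed.

Theorem mainTheorem11 (d : measure_display) (T : measurableType d)
  (R : realType) (P : probability T R) (V : nat -> T -> R)
  (mu eps q : R) :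
  iid P V ->
  (forall n w, 0 <= V n w) ->
  0 < mu -> 0 < eps -> eps < mu ->
  2 < q ->
  (\int[P]_w ((V 0%N w) `^ q)%:E < +oo)%E ->
  exists (C : R) (S : nat), forall s : nat, (S <= s)%N -> (1 <= s)%N ->
    (\int[P]_w kappa mu eps s V w <= (C * (s%:R `^ (q / (q - 1))))%:E)%E.
Proof.
move=> [mV [_ idV]] V0 mu0 eps0 epsmu q2 Mfin.
set c := mu - eps.
have c0 : 0 < c by rewrite /c subr_gt0.
set I := (\int[P]_w ((V 0%N w) `^ q)%:E)%E.
have I0 : (0 <= I)%E by apply: integral_ge0 => w _; rewrite lee_fin powR_ge0.
have Ifin : I \is a fin_num by rewrite ge0_fin_numE.
set M := fine I.
have M0 : 0 <= M by rewrite fine_ge0.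
set r := q / (q - 1).
set D := (c^-1) `^ q.
have D0 : 0 <= D by rewrite powR_ge0.
exists (3 + 2 * M * D), 1%N => s _ s1.
set y := s%:R `^ r.
have s1R : (1 : R) <= s%:R by rewrite ler1n.
have r0 : 0 <= r by rewrite /r divr_ge0 //; lra.
have y1 : 1 <= y by have := @ler_powR R s%:R s1R 0 r r0; rewrite powRr0.
set K := (Num.truncn y).+1.
have yK : y < K%:R by apply: truncnS_gt.
have Ky : K%:R <= y + 1.
  by rewrite /K -natr1 lerD2r truncn_le; lra.
have K1 : (1 <= K)%N by [].
pose V' := fun (_ : nat) => V 0%N.
have mV' : forall n, measurable_fun setT (V' n) by move=> n; exact: mV.
have step1 : (\int[P]_w kappa mu eps s V w <=
    \int[P]_w ((K.+1)%:R%:E + \sum_(n <oo) kterm mu eps s V K n w))%E.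
  apply: le_int_nm => w; last exact: kappa_le.
  apply: le_ereal_inf_tmp => _ [k _ <-]; by rewrite lee_fin.
have step2 : (\int[P]_w ((K.+1)%:R%:E + \sum_(n <oo) kterm mu eps s V K n w) =
    (K.+1)%:R%:E + \sum_(n <oo) \int[P]_w kterm mu eps s V K n w)%E.
  rewrite ge0_integralD//.
  - rewrite integral_nneseries//; last by move=> n x _; exact: kterm_ge0.
      rewrite integral_cst//; congr (_ + _)%E; rewrite -[RHS]mule1; congr (_ * _)%E; exact: probability_setT.
    by move=> n; exact: kterm_meas.
  - by move=> x _; apply: nneseries_ge0 => n _ _; exact: kterm_ge0.
  - apply: (@ge0_emeasurable_sum _ _ _ setT _ xpredT).
      by move=> k x _ _; exact: kterm_ge0.
    by move=> k _; exact: kterm_meas.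
have step3 : (\sum_(n <oo) \int[P]_w kterm mu eps s V K n w =
    \sum_(n <oo) \int[P]_w kterm mu eps s V' K n w)%E.
  apply: eq_eseriesr => n _; rewrite !int_kterm//.
  by congr (_ * _)%E; rewrite /V' idV//; exact: measurable_itv.
have step4 : (\sum_(n <oo) \int[P]_w kterm mu eps s V' K n w =
    \int[P]_w \sum_(n <oo) kterm mu eps s V' K n w)%E.
  rewrite integral_nneseries//; last by move=> n x _; exact: kterm_ge0.
  by move=> n; exact: kterm_meas.
set Kp := K%:R `^ (q - 2).
have Kp0 : 0 < Kp by rewrite powR_gt0// ltr0n.
set k := 2 * (s%:R `^ q * D) / Kp.
have k0 : 0 <= k by rewrite /k divr_ge0 ?mulr_ge0 ?powR_ge0// ltW.
have step5 : (\int[P]_w \sum_(n <oo) kterm mu eps s V' K n w <=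
    \int[P]_w (k * V 0%N w `^ q)%:E)%E.
  apply: le_int_nm => w.
    by apply: nneseries_ge0 => n _ _; exact: kterm_ge0.
  apply: nneseries_le_bound => [n|N]; first exact: kterm_ge0.
  under eq_bigr do rewrite kterm_eq.
  rewrite sumEFin lee_fin /V'.
  have a0 : 0 < c / s%:R by rewrite divr_gt0// ltr0n.
  apply: le_trans (psum_bound R (c / s%:R) (V 0%N w) q K N a0 (V0 0%N w) q2 K1) _.
  rewrite le_eqVlt; apply/orP; left; apply/eqP.
  have -> : V 0%N w / (c / s%:R) = V 0%N w * (s%:R * c^-1).
    by rewrite invf_div.
  rewrite (@powRM R (V 0%N w) (s%:R / c) q (V0 0%N w)); last by rewrite divr_ge0// ltW.
  rewrite (@powRM R s%:R c^-1 q); [|by []|by rewrite invr_ge0 ltW].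
  by rewrite /k /D -/Kp; ring.
have step6 : (\int[P]_w (k * V 0%N w `^ q)%:E = k%:E * I)%E.
  under eq_integral do rewrite EFinM.
  rewrite ge0_integralZl_EFin//.
  - by move=> x _; rewrite lee_fin powR_ge0.
  - apply/measurable_EFinP.
    apply: (@measurableT_comp _ _ _ _ _ _ (fun x : R => x `^ q) _ (V 0%N)); [exact: measurable_powR|exact: mV].
apply: le_trans step1 _; rewrite step2 step3 step4.
apply: le_trans (leeD2l _ step5) _.
rewrite step6 -(fineK Ifin) -EFinM -EFinD lee_fin -/M.
have y0 : 0 < y by lra.
have key : s%:R `^ q = y * y `^ (q - 2).
  have e : r + r * (q - 2) = q by rewrite /r; field; lra.
  rewrite /y -powRrM -powRD ?e//.
  by apply/implyP => _; rewrite gt_eqF// ltr0n.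
have hK : y `^ (q - 2) <= Kp.
  by apply: ge0_ler_powR; rewrite ?nnegrE ?ltW//; lra.
have yq0 : 0 < y `^ (q - 2) by rewrite powR_gt0.
have h : s%:R `^ q / Kp <= y.
  by rewrite ler_pdivrMr// key ler_wpM2l// ltW.
have -> : k * M = 2 * M * D * (s%:R `^ q / Kp) by rewrite /k; ring.
have MD : 0 <= 2 * M * D by rewrite !mulr_ge0.
have : 2 * M * D * (s%:R `^ q / Kp) <= 2 * M * D * y by rewrite ler_wpM2l.
rewrite -natr1.
nra.
Qed.
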